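(* Let $n\in\mathbb N$ and let $y,z\in B_n$ with $\pi_z<\pi_y$ and $y\not\sim z$. Let $\psi_1^{(n)}$ be the nonnegative principal Dirichlet eigenvector in $B_n$ with $\|\psi_1^{(n)}\|_2=1$, and let $m_y=2\max_{x\sim y}\psi_1^{(n)}(x)$. Then $$\psi_1^{(n)}(y)\le\frac{m_y}{1-\pi_z/\pi_y}.$$
   Context: Lattice $\mathbb Z^d$, $d\ge2$, $x\sim y$ iff $|x-y|_1=1$, with positive conductances $w_{xy}=w_{yx}$ on nearest-neighbour edges. $B_n=[-n,n]^d\cap\mathbb Z^d$, $\pi_x=\sum_{y\sim x}w_{xy}$. $\mathcal E^{\boldsymbol w}(f)=\frac12\sum_x\sum_{y\sim x}w_{xy}(f(x)-f(y))^2$. The principal Dirichlet eigenvalue $\lambda_1^{(n)}=\inf\{\mathcal E^{\boldsymbol w}(f):\mathrm{supp}\,f\subseteq B_n,\|f\|_2=1\}$ is simple (Perron–Frobenius) and $\psi_1^{(n)}$ is the corresponding minimizer, supported in $B_n$, chosen nonnegative with $\|\psi_1^{(n)}\|_2=1$. *)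

(* Defs.v *)
From Stdlib Require Import Reals Lra Lia ZArith List.
Import ListNotations.
Open Scope R_scope.

(* A lattice point of Z^d is a list of d integer coordinates. *)
Definition point := list Z.

Definition sumR (l : list R) : R := fold_right Rplus 0 l.

(* Maximum of a nonempty list of reals (0 for the empty list, never used). *)
Definition listmax (l : list R) : R :=
  match l with [] => 0 | a :: t => fold_right Rmax a t end.

(* The 2d nearest neighbours x +- e_i (i.e. |x - y|_1 = 1) of x. *)
Fixpoint nbrs (x : point) : list point :=
  match x with
  | [] => []
  | c :: t => ((c + 1)%Z :: t) :: ((c - 1)%Z :: t) :: map (cons c) (nbrs t)
  end.

Definition adj (x y : point) : Prop := In y (nbrs x).

Definition pi (w : point -> point -> R) (x : point) : R :=
  sumR (map (w x) (nbrs x)).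

Definition in_box (d n : nat) (x : point) : Prop :=
  length x = d /\ Forall (fun c => (- Z.of_nat n <= c <= Z.of_nat n)%Z) x.

Definition coords (n : nat) : list Z :=
  map (fun k => (Z.of_nat k - Z.of_nat n)%Z) (seq 0 (2 * n + 1)).

Fixpoint box_list (d n : nat) : list point :=
  match d with
  | O => [[]]
  | S d' => flat_map (fun c => map (cons c) (box_list d' n)) (coords n)
  end.

Definition supported (d n : nat) (f : point -> R) : Prop :=
  forall x, length x = d -> ~ in_box d n x -> f x = 0.

(* ||f||_2^2 for f supported in B_n *)
Definition sqnorm (d n : nat) (f : point -> R) : R :=
  sumR (map (fun x => f x ^ 2) (box_list d n)).

(* E^w(f) = 1/2 sum_x sum_{y~x} w_xy (f x - f y)^2, for f supported in B_n:
   every nonzero term has x in B_(n+1), so the sum over x ranges over B_(n+1). *)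
Definition energy (d n : nat) (w : point -> point -> R) (f : point -> R) : R :=
  / 2 * sumR (map (fun x => sumR (map (fun y => w x y * (f x - f y) ^ 2) (nbrs x)))
                  (box_list d (S n))).

(* psi is the nonnegative, L2-normalised minimiser of the Rayleigh problem
   defining lambda_1^(n), i.e. the principal Dirichlet eigenvector psi_1^(n). *)
Definition principal_eigvec (d n : nat) (w : point -> point -> R) (psi : point -> R) : Prop :=
  supported d n psi /\
  (forall x, length x = d -> 0 <= psi x) /\
  sqnorm d n psi = 1 /\
  (forall f, supported d n f -> sqnorm d n f = 1 -> energy d n w psi <= energy d n w f).

(* Main.v *)
Require Import Defs.
From Stdlib Require Import Reals ZArith List Lra Lia Permutation.
Import ListNotations.
Open Scope R_scope.

Section Gen.
Context {A : Type}.

Lemma sumR_ext (l : list A) g h : (forall x, In x l -> g x = h x) ->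
  sumR (map g l) = sumR (map h l).
Proof. intros H; rewrite (map_ext_in g h l H); reflexivity. Qed.

Lemma sumR_plus (l : list A) g h :
  sumR (map (fun x => g x + h x) l) = sumR (map g l) + sumR (map h l).
Proof. induction l; simpl; [lra|]. rewrite IHl; lra. Qed.

Lemma sumR_minus (l : list A) g h :
  sumR (map g l) - sumR (map h l) = sumR (map (fun x => g x - h x) l).
Proof. induction l; simpl; [lra|]. rewrite <- IHl; lra. Qed.

Lemma sumR_scal (l : list A) k g :
  sumR (map (fun x => k * g x) l) = k * sumR (map g l).
Proof. induction l; simpl; [lra|]. rewrite IHl; lra. Qed.

Lemma sumR_le (l : list A) g h : (forall x, In x l -> g x <= h x) ->
  sumR (map g l) <= sumR (map h l).
Proof. induction l; simpl; intros H; [lra|].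
  pose proof (H a (or_introl eq_refl)). pose proof (IHl (fun x Hx => H x (or_intror Hx))). lra. Qed.

Lemma sumR_zero (l : list A) g : (forall x, In x l -> g x = 0) -> sumR (map g l) = 0.
Proof. induction l; simpl; intros H; [lra|].
  rewrite H by auto. rewrite IHl by auto. lra. Qed.

Lemma sumR_single (l : list A) g p : NoDup l -> In p l ->
  (forall x, In x l -> x <> p -> g x = 0) -> sumR (map g l) = g p.
Proof.
  induction l as [|a l IH]; simpl; intros Hnd Hp H; [contradiction|].
  inversion Hnd; subst. destruct Hp as [<-|Hp].
  - rewrite sumR_zero. lra. intros x Hx. apply H; auto. intros ->; contradiction.
  - rewrite H; auto. rewrite IH; auto. lra. intros ->; contradiction.
Qed.

Lemma sumR_filter (l : list A) (P : A -> bool) g :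
  sumR (map (fun x => if P x then g x else 0) l) = sumR (map g (filter P l)).
Proof. induction l; simpl; [lra|]. destruct (P a); simpl; rewrite IHl; lra. Qed.

Lemma sumR_perm (l l' : list R) : Permutation l l' -> sumR l = sumR l'.
Proof. induction 1; simpl; lra. Qed.

End Gen.

Lemma NoDup_map_cons (c : Z) (l : list point) : NoDup l -> NoDup (map (cons c) l).
Proof.
  induction 1; simpl; constructor; auto.
  intros Hin. apply in_map_iff in Hin. destruct Hin as [y [Hy Hy']]. inversion Hy; subst; auto.
Qed.

Lemma nbrs_len x u : In u (nbrs x) -> length u = length x.
Proof.
  revert u; induction x as [|c t IH]; simpl; intros u H; [contradiction|].
  destruct H as [<-|[<-|H]]; simpl; auto.
  apply in_map_iff in H. destruct H as [v [<- Hv]]. simpl. rewrite (IH v Hv). reflexivity.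
Qed.

Lemma nbrs_sym x u : In u (nbrs x) -> In x (nbrs u).
Proof.
  revert u; induction x as [|c t IH]; simpl; intros u H; [contradiction|].
  destruct H as [<-|[<-|H]]; simpl.
  - right; left. f_equal. lia.
  - left. f_equal. lia.
  - apply in_map_iff in H. destruct H as [v [<- Hv]]. simpl. right; right.
    apply in_map. auto.
Qed.

Lemma nbrs_irrefl x : ~ In x (nbrs x).
Proof.
  induction x as [|c t IH]; simpl; [auto|].
  intros [H|[H|H]].
  - inversion H; lia.
  - inversion H; lia.
  - apply in_map_iff in H. destruct H as [v [Hv Hv']]. inversion Hv; subst. auto.
Qed.

Lemma nbrs_NoDup x : NoDup (nbrs x).
Proof.
  induction x as [|c t IH]; simpl; [constructor|].
  constructor.
  - intros [H|H]. inversion H; lia.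
    apply in_map_iff in H. destruct H as [v [Hv _]]. inversion Hv; lia.
  - constructor.
    + intros H. apply in_map_iff in H. destruct H as [v [Hv _]]. inversion Hv; lia.
    + apply NoDup_map_cons; auto.
Qed.

Lemma in_box_S d n x : in_box d n x -> in_box d (S n) x.
Proof.
  intros [Hl Hf]. split; auto. eapply Forall_impl; [|exact Hf]. simpl. intros c Hc. lia.
Qed.

Lemma in_box_nbrs d n p u : in_box d n p -> In u (nbrs p) -> in_box d (S n) u.
Proof.
  revert d u; induction p as [|c t IH]; simpl; intros d u Hb H; [contradiction|].
  destruct Hb as [Hl Hf]. inversion Hf; subst. simpl in *.
  destruct H as [<-|[<-|H]].
  - split; simpl; auto. constructor. lia. eapply Forall_impl; [|eassumption]. simpl; intros; lia.
  - split; simpl; auto. constructor. lia. eapply Forall_impl; [|eassumption]. simpl; intros; lia.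
  - apply in_map_iff in H. destruct H as [v [<- Hv]].
    destruct (IH (length t) v (conj eq_refl H3) Hv) as [Hl' Hf'].
    split; simpl; auto. constructor; auto. lia.
Qed.

Lemma box_in d n x : in_box d n x -> In x (box_list d n).
Proof.
  revert x; induction d as [|d IH]; intros x [Hl Hf].
  - destruct x; simpl in *; [auto|discriminate].
  - destruct x as [|c t]; simpl in Hl; [discriminate|]. inversion Hf; subst.
    simpl. apply in_flat_map. exists c. split.
    + unfold coords. apply in_map_iff. exists (Z.to_nat (c + Z.of_nat n)). split.
      * rewrite Z2Nat.id; lia.
      * apply in_seq. lia.
    + apply in_map. apply IH. split; auto.
Qed.

Lemma box_NoDup d n : NoDup (box_list d n).
Proof.
  induction d as [|d IH]; simpl. constructor; [auto|constructor].
  assert (Hc : NoDup (coords n)).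
  { unfold coords. generalize (seq_NoDup (2*n+1) 0). generalize (seq 0 (2*n+1)).
    induction 1; simpl; constructor; auto.
    intros Hin. apply in_map_iff in Hin. destruct Hin as [k [Hk Hk']].
    assert (k = x) by lia. subst; auto. }
  induction Hc; simpl. constructor.
  apply NoDup_app; auto. apply NoDup_map_cons; auto.
  intros a Ha Hb. apply in_map_iff in Ha. destruct Ha as [v [<- _]].
  apply in_flat_map in Hb. destruct Hb as [c [Hc0 Hv]]. apply in_map_iff in Hv.
  destruct Hv as [v' [Hv' _]]. inversion Hv'; subst; auto.
Qed.

Definition pdec := list_eq_dec Z.eq_dec.

Lemma sum_change (L : list point) (g g' : point -> R) p : NoDup L -> In p L ->
  (forall x, x <> p -> g' x = g x) ->
  sumR (map g' L) = sumR (map g L) + g' p - g p.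
Proof.
  intros Hnd Hp H.
  assert (sumR (map g' L) - sumR (map g L) = g' p - g p); [|lra].
  rewrite sumR_minus. apply (sumR_single L (fun x => g' x - g x)); auto.
  intros x _ Hx. rewrite H; auto; lra.
Qed.

Lemma energy_change (L : list point) (w : point -> point -> R) (f f' : point -> R) p :
  NoDup L -> In p L -> (forall u, In u (nbrs p) -> In u L) ->
  (forall u, In u (nbrs p) -> w p u = w u p) -> (forall x, x <> p -> f' x = f x) ->
  sumR (map (fun x => sumR (map (fun u => w x u * (f' x - f' u)^2) (nbrs x))) L)
  - sumR (map (fun x => sumR (map (fun u => w x u * (f x - f u)^2) (nbrs x))) L)
  = 2 * sumR (map (fun u => w p u * (f' p - f u)^2 - w p u * (f p - f u)^2) (nbrs p)).
Proof.
  intros Hnd Hp Hsub Hw Hf.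
  set (D := fun x u => w x u * (f' x - f' u)^2 - w x u * (f x - f u)^2).
  set (Asum := sumR (map (fun u => w p u * (f' p - f u)^2 - w p u * (f p - f u)^2) (nbrs p))).
  assert (HA : sumR (map (D p) (nbrs p)) = Asum).
  { apply sumR_ext. intros u Hu. unfold D.
    assert (Hup : u <> p) by (intros E; rewrite E in Hu; apply (nbrs_irrefl p Hu)).
    rewrite (Hf u Hup). reflexivity. }
  set (P := fun x => if pdec x p then false else if in_dec pdec p (nbrs x) then true else false).
  rewrite sumR_minus.
  rewrite (sumR_ext L _ (fun x => (if pdec x p then Asum else 0) + (if P x then D x p else 0))).
  2:{ intros x Hx. rewrite sumR_minus. fold (D x). unfold P.
      destruct (pdec x p) as [->|Hxp]. rewrite HA; lra.
      destruct (in_dec pdec p (nbrs x)) as [Hin|Hin].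
      - rewrite (sumR_single _ _ p (nbrs_NoDup x) Hin). lra.
        intros u _ Hu. unfold D. rewrite !Hf; auto. lra.
      - rewrite sumR_zero. lra. intros u Hu. unfold D. rewrite !Hf; auto. lra.
        intros ->; contradiction. }
  rewrite sumR_plus.
  rewrite (sumR_single L _ p Hnd Hp).
  2:{ intros x _ Hx. destruct (pdec x p); [contradiction|reflexivity]. }
  destruct (pdec p p) as [_|C]; [|congruence].
  rewrite sumR_filter.
  assert (Hperm : Permutation (filter P L) (nbrs p)).
  { apply NoDup_Permutation. apply NoDup_filter; auto. apply nbrs_NoDup.
    intros x. rewrite filter_In. unfold P. split.
    - intros [_ H]. destruct (pdec x p); [discriminate|].
      destruct (in_dec pdec p (nbrs x)); [|discriminate]. apply nbrs_sym; auto.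
    - intros H. split; auto. destruct (pdec x p) as [->|].
      + exfalso; apply (nbrs_irrefl p H).
      + destruct (in_dec pdec p (nbrs x)); auto. exfalso. apply n0, nbrs_sym; auto. }
  pose proof (sumR_perm _ _ (Permutation_map (fun x => D x p) Hperm)) as HPm.
  change (@filter (list Z) P L) with (@filter point P L) in HPm.
  assert (sumR (map (fun x => D x p) (nbrs p)) = Asum); [|simpl in *; lra].
  rewrite <- HA. apply sumR_ext. intros u Hu. unfold D.
  assert (Hup : u <> p) by (intros E; rewrite E in Hu; apply (nbrs_irrefl p Hu)).
  rewrite (Hf u Hup), (Hw u Hu). ring.
Qed.

Lemma fold_max_ge a t : a <= fold_right Rmax a t /\ forall v, In v t -> v <= fold_right Rmax a t.
Proof.
  induction t as [|b t IH]; simpl. split; [lra|tauto].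
  destruct IH as [H1 H2]. split.
  - eapply Rle_trans; [exact H1|apply Rmax_r].
  - intros v [<-|Hv]. apply Rmax_l. eapply Rle_trans; [apply H2; auto|apply Rmax_r].
Qed.

Lemma listmax_ge l v : In v l -> v <= listmax l.
Proof.
  destruct l as [|a t]; simpl; [contradiction|]. destruct (fold_max_ge a t) as [H1 H2].
  intros [<-|Hv]; auto.
Qed.

Theorem lemma5p5 (d : nat) (hd : (2 <= d)%nat) (w : point -> point -> R)
  (wpos : forall x y, length x = d -> adj x y -> 0 < w x y)
  (wsym : forall x y, length x = d -> adj x y -> w x y = w y x)
  (n : nat) (psi : point -> R) (hpsi : principal_eigvec d n w psi)
  (y z : point) (hy : in_box d n y) (hz : in_box d n z)
  (hpi : pi w z < pi w y) (hyz : ~ adj y z) :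
  psi y <= (2 * listmax (map psi (nbrs y))) / (1 - pi w z / pi w y).
Proof.
  destruct hpsi as [Hsupp [Hnn [Hnorm Hmin]]].
  assert (Hly : length y = d) by apply hy.
  assert (Hlz : length z = d) by apply hz.
  assert (Hyz : y <> z) by (intros ->; lra).
  set (a := psi y). set (b := psi z). set (M := listmax (map psi (nbrs y))).
  assert (Ha : 0 <= a) by (apply Hnn; auto).
  assert (Hb : 0 <= b) by (apply Hnn; auto).
  set (c := sqrt (a^2 + b^2)).
  assert (Hc0 : 0 <= c) by apply sqrt_pos.
  assert (Hc2 : c^2 = a^2 + b^2).
  { unfold c. rewrite <- Rsqr_pow2, Rsqr_sqrt; [ring|nra]. }
  assert (Hcb : b <= c) by nra.
  set (psi1 := fun x => if pdec x y then 0 else psi x).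
  set (f := fun x => if pdec x z then c else psi1 x).
  assert (Hsf : supported d n f).
  { intros x Hl Hb'. unfold f, psi1.
    destruct (pdec x z) as [->|]; [contradiction|].
    destruct (pdec x y) as [->|]; [contradiction|]. apply Hsupp; auto. }
  assert (HnyL : forall u, In u (nbrs y) -> length u = d).
  { intros u Hu. rewrite (nbrs_len _ _ Hu). auto. }
  assert (HnzL : forall u, In u (nbrs z) -> length u = d).
  { intros u Hu. rewrite (nbrs_len _ _ Hu). auto. }
  assert (Hf1 : forall x, x <> z -> f x = psi1 x).
  { intros x Hx. unfold f. destruct (pdec x z); [contradiction|reflexivity]. }
  assert (Hp1 : forall x, x <> y -> psi1 x = psi x).
  { intros x Hx. unfold psi1. destruct (pdec x y); [contradiction|reflexivity]. }
  assert (Hfz : f z = c) by (unfold f; destruct (pdec z z); congruence).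
  assert (Hp1y : psi1 y = 0) by (unfold psi1; destruct (pdec y y); congruence).
  assert (Hp1z : psi1 z = b) by (apply Hp1; auto).
  assert (Hnf : sqnorm d n f = 1).
  { unfold sqnorm in *.
    rewrite (sum_change _ (fun x => psi1 x ^ 2) (fun x => f x ^ 2) z (box_NoDup d n) (box_in _ _ _ hz)).
    2:{ intros x Hx. rewrite Hf1; auto. }
    rewrite (sum_change _ (fun x => psi x ^ 2) (fun x => psi1 x ^ 2) y (box_NoDup d n) (box_in _ _ _ hy)).
    2:{ intros x Hx. rewrite Hp1; auto. }
    rewrite Hnorm, Hfz, Hp1y, Hp1z. fold a. nra. }
  pose proof (Hmin f Hsf Hnf) as HE. unfold energy in HE.
  pose proof (energy_change (box_list d (S n)) w psi psi1 y (box_NoDup d (S n))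
     (box_in _ _ _ (in_box_S _ _ _ hy))
     (fun u Hu => box_in _ _ _ (in_box_nbrs _ _ _ _ hy Hu))
     (fun u Hu => wsym y u Hly Hu) Hp1) as E1.
  pose proof (energy_change (box_list d (S n)) w psi1 f z (box_NoDup d (S n))
     (box_in _ _ _ (in_box_S _ _ _ hz))
     (fun u Hu => box_in _ _ _ (in_box_nbrs _ _ _ _ hz Hu))
     (fun u Hu => wsym z u Hlz Hu) Hf1) as E2.
  rewrite Hp1y in E1. fold a in E1. rewrite Hfz, Hp1z in E2.
  assert (B1 : sumR (map (fun u => w y u * (0 - psi u) ^ 2 - w y u * (a - psi u) ^ 2) (nbrs y))
               <= (2 * a * M - a^2) * pi w y).
  { unfold pi. rewrite <- sumR_scal. apply sumR_le. intros u Hu.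
    pose proof (wpos y u Hly Hu). pose proof (Hnn u (HnyL u Hu)).
    assert (psi u <= M) by (apply listmax_ge, in_map; auto).
    assert (0 <= w y u * (a * (M - psi u))) by (apply Rmult_le_pos; [lra|apply Rmult_le_pos; lra]).
    nra. }
  assert (B2 : sumR (map (fun u => w z u * (c - psi1 u) ^ 2 - w z u * (b - psi1 u) ^ 2) (nbrs z))
               <= a^2 * pi w z).
  { unfold pi. rewrite <- sumR_scal. apply sumR_le. intros u Hu.
    pose proof (wpos z u Hlz Hu).
    assert (Huy : u <> y) by (intros ->; apply hyz, nbrs_sym; auto).
    rewrite Hp1 by auto. pose proof (Hnn u (HnzL u Hu)).
    assert (0 <= w z u * ((c - b) * psi u)) by (apply Rmult_le_pos; [lra|apply Rmult_le_pos; lra]).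
    nra. }
  assert (Hpz : 0 <= pi w z).
  { unfold pi. rewrite <- (sumR_zero (nbrs z) (fun _ => 0)) by auto. apply sumR_le.
    intros u Hu. left. apply wpos; auto. }
  assert (HM : 0 <= M).
  { destruct y as [|y0 yt]. simpl in Hly. lia.
    eapply Rle_trans; [|apply listmax_ge, in_map; simpl; left; reflexivity].
    apply Hnn. simpl. rewrite <- Hly. reflexivity. }
  assert (Hmain : 0 <= (2 * a * M - a^2) * pi w y + a^2 * pi w z) by lra.
  assert (Hk : a * (pi w y - pi w z) <= 2 * M * pi w y).
  { destruct (Req_dec a 0) as [->|Hne]. nra.
    assert (0 < a) by lra. nra. }
  set (D := 1 - pi w z / pi w y).
  assert (HD : D * pi w y = pi w y - pi w z) by (unfold D; field; lra).
  assert (HDp : 0 < D).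
  { apply (Rmult_lt_reg_r (pi w y)); lra. }
  apply (Rmult_le_reg_r D); auto.
  unfold Rdiv. rewrite Rmult_assoc, Rinv_l, Rmult_1_r by lra.
  apply (Rmult_le_reg_r (pi w y)); [lra|]. rewrite Rmult_assoc, HD. lra.
Qed.
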